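(* Let $q$ be a prime power and let $m,\ell,r_1,\dots,r_m,k,N$ be positive integers with $\ell\le k\le m\ell$ and $N\ge m\ell$, and set $n:=\sum_{i=1}^m(\ell+r_i)$. Let $\widetilde G\in\mathbb{F}_{q^N}^{k\times m\ell}$ be a generator matrix of an $\mathbb{F}_{q^N}$-linear MRD code of length $m\ell$ and dimension $k$. For $i=1,\dots,m$ let $M_i\in\mathbb{F}_q^{\ell\times(\ell+r_i)}$ be a generator matrix of an $[\ell+r_i,\ell]$-MDS code over $\mathbb{F}_q$, and let $M\in\mathbb{F}_q^{m\ell\times n}$ be the block-diagonal matrix with diagonal blocks $M_1,\dots,M_m$ (all other entries zero). Then $\widetilde G M$ is a generator matrix of an $[n,k,\ell;r_1,\dots,r_m]$-PMDS code over $\mathbb{F}_{q^N}$, where the blocks are the consecutive column groups of sizes $\ell+r_1,\dots,\ell+r_m$.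
   Context: An $[n,k]$-MDS code over a field $\mathbb{F}$ is a linear code in $\mathbb{F}^n$ of dimension $k$ and minimum Hamming distance $n-k+1$. PMDS codes: let $\ell,m,r_1,\dots,r_m$ be positive integers, $n=\sum_{i=1}^m(r_i+\ell)$, and $C\subseteq\mathbb{F}^n$ a linear code of dimension $k<n$ with generator matrix $G=(B_1\mid\dots\mid B_m)$, $B_i\in\mathbb{F}^{k\times(r_i+\ell)}$. Then $C$ is an $[n,k,\ell;r_1,\dots,r_m]$-PMDS code if (i) for each $i$ the row space of $B_i$ is an $[r_i+\ell,\ell]$-MDS code, and (ii) for any choice of $r_i$ erased coordinates in the $i$-th block for every $i$, the code obtained from $C$ by puncturing these coordinates is an $[m\ell,k]$-MDS code. Rank metric: fixing an $\mathbb{F}_q$-basis of $\mathbb{F}_{q^N}$, each $u\in\mathbb{F}_{q^N}^{n'}$ is identified with a matrix in $\mathbb{F}_q^{N\times n'}$; the rank distance $d_R(u,v)$ is the rank of the matrix of $u-v$. An $\mathbb{F}_{q^N}$-linear rank-metric code of length $n'$ and dimension $k$ is a $k$-dimensional $\mathbb{F}_{q^N}$-subspace of $\mathbb{F}_{q^N}^{n'}$; it is MRD (maximum rank distance) if its minimum rank distance equals $n'-k+1$. *)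

(* Defs.v *)
From HB Require Import structures.
From mathcomp Require Import all_boot all_order all_algebra all_field.
Set Implicit Arguments. Unset Strict Implicit. Unset Printing Implicit Defensive.
Import Order.TTheory GRing.Theory Num.Theory.
Local Open Scope ring_scope.

Section Codes.
Variable K : fieldType.

Definition hweight n (u : 'rV[K]_n) : nat := #|[set j | u 0 j != 0]|.

(* The code C = row space of A (A : p x n, any number of rows) has minimum
   distance d w.r.t. the weight function w (distance d(u,v) = w (u - v)). *)
Definition has_min_dist p n (w : 'rV[K]_n -> nat) (A : 'M[K]_(p, n)) (d : nat) :=
  (exists2 c : 'rV[K]_n, (c <= A)%MS & c != 0 /\ w c = d) /\
  (forall c : 'rV[K]_n, (c <= A)%MS -> c != 0 -> (d <= w c)%N).

Definition MDS_code p n (A : 'M[K]_(p, n)) (k : nat) :=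
  \rank A = k /\ has_min_dist (@hweight n) A (n - k + 1).

End Codes.

Lemma sum_const_ord (m l : nat) : (\sum_(i < m) l)%N = (m * l)%N.
Proof. by rewrite big_const_ord iter_addn_0 mulnC. Qed.

(* PMDS codes. G : k x (\sum_i (l + r i)), blocks are consecutive column
   groups of sizes l + r 0, ..., l + r (m-1); submxrow G i is the block B_i. *)
Section PMDS.
Variable K : fieldType.

(* Puncturing: in block i keep the l coordinates in the image of the
   injective map f i (i.e. erase the other r i coordinates). *)
Definition punct_mx k m l (r : 'I_m -> nat)
    (G : 'M[K]_(k, \sum_(i < m) (l + r i)))
    (f : forall i : 'I_m, 'I_l -> 'I_(l + r i)) : 'M[K]_(k, m * l) :=
  castmx (erefl k, sum_const_ord m l)
    (\mxrow_(i < m) colsub (f i) (submxrow G i)).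

Definition is_PMDS k m l (r : 'I_m -> nat)
    (G : 'M[K]_(k, \sum_(i < m) (l + r i))) :=
  [/\ \rank G = k, (k < \sum_(i < m) (l + r i))%N,
      forall i : 'I_m, MDS_code (submxrow G i) l &
      forall f : forall i : 'I_m, 'I_l -> 'I_(l + r i),
        (forall i, injective (f i)) -> MDS_code (punct_mx G f) k].
End PMDS.

Definition diag_block (T : nzRingType) m (p q : 'I_m -> nat)
    (Ms : forall i, 'M[T]_(p i, q i)) (i j : 'I_m) : 'M[T]_(p i, q j) :=
  match i =P j with
  | ReflectT e => castmx (erefl (p i), f_equal q e) (Ms i)
  | ReflectF _ => 0
  end.

Definition blockdiag_mx (T : nzRingType) m l (r : 'I_m -> nat)
    (Ms : forall i, 'M[T]_(l, l + r i)) : 'M[T]_(m * l, \sum_(i < m) (l + r i)) :=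
  castmx (sum_const_ord m l, erefl _)
    (\mxblock_(i < m, j < m) @diag_block T m (fun=> l) (fun i => l + r i) Ms i j).

Definition rweight (F : fieldType) (L : fieldExtType F) n (u : 'rV[L]_n) : nat :=
  \rank (\matrix_(i < \dim (fullv : {vspace L}), j < n)
            coord (vbasis (fullv : {vspace L})) i (u 0 j)).

Definition MRD_gen (F : fieldType) (L : fieldExtType F) k n (G : 'M[L]_(k, n)) :=
  \rank G = k /\ has_min_dist (@rweight F L n) G (n - k + 1).

(* Main.v *)
Require Import Defs.
From HB Require Import structures.
From mathcomp Require Import all_boot all_order all_algebra all_field.
From mathcomp Require Import zify.
Set Implicit Arguments. Unset Strict Implicit. Unset Printing Implicit Defensive.
Import Order.TTheory GRing.Theory Num.Theory.
Local Open Scope ring_scope.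

Lemma arith1 (a b c : nat) : (0 < a)%N -> (a - 1 <= b)%N -> (c <= b - (a - 1))%N -> (c + a <= b + 1)%N.
Proof. lia. Qed.

Lemma arith2 (n k s rB w U : nat) : (n - k + 1 <= w)%N -> (w + (k - rB) <= U + 1)%N ->
  (U <= n - s)%N -> (rB < s)%N -> (s <= k)%N -> False.
Proof. lia. Qed.

Lemma arith3 (n k w U : nat) : (w + k <= U + 1)%N -> (U <= n)%N -> (n - k + 1 <= w)%N -> w = (n - k + 1)%N.
Proof. lia. Qed.

Lemma arith4 (n k w S : nat) : (k <= n)%N -> (w < n - k + 1)%N -> S = (n - w)%N -> (k <= S)%N.
Proof. lia. Qed.

Lemma arith5 (U C n s : nat) : (U <= C)%N -> (s + C = n)%N -> (U <= n - s)%N.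
Proof. lia. Qed.

Lemma arith6 (k ml sr m : nat) : (0 < m)%N -> (k <= ml)%N -> (m <= sr)%N -> (k < ml + sr)%N.
Proof. lia. Qed.

Section Gen.
Variable K : fieldType.

Lemma pick_inj n (S : {set 'I_n}) s : (s <= #|S|)%N ->
  exists g : 'I_s -> 'I_n, injective g /\ forall t, g t \in S.
Proof.
move=> Hs; exists (fun t => @enum_val _ (mem S) (widen_ord Hs t)); split.
  by move=> a b /enum_val_inj /(congr1 val) /= ab; apply/val_inj.
by move=> t; apply: (@enum_valP _ (mem S)).
Qed.

Lemma rank_le_cols p n (A : 'M[K]_(p, n)) : (\rank A <= #|[set j | col j A != 0%R]|)%N.
Proof.
set S := [set j | col j A != 0].
rewrite -mxrank_tr.
have sub : (A^T <= rowsub (fun t => @enum_val _ (mem S) t) A^T)%MS.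
  apply/row_subP => j.
  case: (boolP (j \in S)) => Hj.
    rewrite -(enum_rankK_in Hj Hj) -row_rowsub; exact: row_sub.
  move: Hj; rewrite inE negbK => /eqP Hj.
  by rewrite -tr_col Hj trmx0 sub0mx.
exact: leq_trans (mxrankS sub) (rank_leq_row _).
Qed.

Lemma sub_col0 p n (Z : 'M[K]_(p, n)) (c : 'rV_n) j :
  (c <= Z)%MS -> col j Z = 0 -> c 0 j = 0.
Proof.
move=> /submxP [w ->] Hj.
rewrite !mxE big1 // => t _.
have := congr1 (fun M : 'M[K]_(p,1) => M t 0) Hj; rewrite !mxE => ->; exact: mulr0.
Qed.

Lemma col_mulmx p n q (A : 'M[K]_(p, n)) (B : 'M_(n, q)) j :
  col j (A *m B) = A *m col j B.
Proof. by rewrite !colE mulmxA. Qed.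

Lemma low_weight p n (Z : 'M[K]_(p, n)) : (0 < \rank Z)%N ->
  exists2 c : 'rV_n, (c <= Z)%MS &
    c != 0 /\ (hweight c + \rank Z <= #|[set j | col j Z != 0%R]| + 1)%N.
Proof.
move=> Hr; set U := [set j | col j Z != 0%R].
have HU : ((\rank Z).-1 <= #|U|)%N by apply: leq_trans (leq_pred _) (rank_le_cols Z).
have [g [ginj gU]] := pick_inj HU.
set R := row_base Z.
have : ~~ row_free (colsub g R).
  rewrite /row_free; apply/negP => /eqP H; have := rank_leq_col (colsub g R).
  rewrite H; lia.
rewrite -kermx_eq0 => /rowV0Pn [v /sub_kermxP Hv vnz].
have cZ : (v *m R <= Z)%MS.
  by rewrite (submx_trans (submxMl _ _)) // eq_row_base.
exists (v *m R) => //; split; first by rewrite mulmx_free_eq0 ?row_base_free.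
have Hsub : [set j | (v *m R) 0 j != 0] \subset U :\: (g @: [set: 'I_ _]).
  apply/subsetP => j; rewrite !inE => Hj; apply/andP; split.
    apply/negP => /imsetP [t _ Ejt]; move: Hj; rewrite Ejt.
    have : (colsub g (v *m R)) 0 t = 0 by rewrite -mulmx_colsub Hv mxE.
    by rewrite mxE => ->; rewrite eqxx.
  by apply/eqP => H0; move/eqP: Hj; apply; exact: (sub_col0 cZ H0).
have := subset_leq_card Hsub.
rewrite cardsD (setIidPr _); last by apply/subsetP => x /imsetP [t _ ->]; exact: gU.
rewrite card_imset // cardsT card_ord /hweight.
by move: HU; rewrite -!subn1; apply: arith1.
Qed.

Lemma mds_info k n (A : 'M[K]_(k, n)) s (g : 'I_s -> 'I_n) :
  row_free A -> (forall c : 'rV_n, (c <= A)%MS -> c != 0 -> (n - k + 1 <= hweight c)%N) ->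
  injective g -> (s <= k)%N -> \rank (colsub g A) = s.
Proof.
move=> Afree Hd ginj Hsk; set B := colsub g A.
apply/eqP; rewrite eqn_leq rank_leq_col /=; apply/negPn/negP; rewrite -ltnNge => Hlt.
set Z := kermx B *m A.
have rZ : \rank Z = (k - \rank B)%N by rewrite mxrankMfree // mxrank_ker.
have Z0 : (0 < \rank Z)%N by rewrite rZ subn_gt0 (leq_trans Hlt Hsk).
have [c cZ [cnz Hc]] := low_weight Z0.
have Uc : (#|[set j | col j Z != 0%R]| <= n - s)%N.
  have sub: [set j | col j Z != 0%R] \subset ~: (g @: [set: 'I_s]).
    apply/subsetP => j; rewrite !inE; apply: contraNN => /imsetP [t _ ->].
    rewrite /Z col_mulmx -col_colsub -/B -col_mulmx mulmx_ker.
    by apply/eqP/matrixP => a b; rewrite !mxE.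
  have := cardsC (g @: [set: 'I_s]); rewrite card_imset // cardsT !card_ord.
  by have := subset_leq_card sub; apply: arith5.
have := Hd c (submx_trans cZ (submxMl _ _)) cnz.
rewrite rZ in Hc.
move=> H; exfalso; exact: (arith2 H Hc Uc Hlt Hsk).
Qed.

Lemma mds_from_info k n (A : 'M[K]_(k, n)) :
  row_free A -> (forall g : 'I_k -> 'I_n, injective g -> row_free (colsub g A)) ->
  forall c : 'rV_n, (c <= A)%MS -> c != 0 -> (n - k + 1 <= hweight c)%N.
Proof.
move=> Afree Hg c /submxP [v ->] cnz.
rewrite leqNgt; apply/negP => Hlt.
set Sz := [set j | (v *m A) 0 j == 0].
have HS : (k <= #|Sz|)%N.
  apply: (arith4 _ Hlt).
    by move: Afree; rewrite /row_free => /eqP <-; exact: rank_leq_col.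
  have -> : Sz = ~: [set j | (v *m A) 0 j != 0] by apply/setP => j; rewrite !inE negbK.
  by rewrite cardsCs setCK card_ord.
have [g [ginj gS]] := pick_inj HS.
have : v *m colsub g A = 0.
  rewrite mulmx_colsub; apply/matrixP => a t; rewrite (ord1 a) [LHS]mxE [RHS]mxE.
  by have := gS t; rewrite inE => /eqP.
move/eqP; rewrite mulmx_free_eq0 ?Hg // => /eqP v0.
by move: cnz; rewrite v0 mul0mx eqxx.
Qed.

Lemma mds_of_bound p n (A : 'M[K]_(p, n)) k : \rank A = k -> (0 < k)%N ->
  (forall c, (c <= A)%MS -> c != 0 -> (n - k + 1 <= hweight c)%N) -> MDS_code A k.
Proof.
move=> rA k0 Hd; split => //; split => //.
have [c cA [cnz Hc]] : exists2 c : 'rV_n, (c <= A)%MS &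
    c != 0 /\ (hweight c + \rank A <= #|[set j | col j A != 0%R]| + 1)%N.
  by apply: low_weight; rewrite rA.
exists c => //; split => //.
rewrite rA in Hc.
apply: (arith3 Hc) (Hd c cA cnz).
by have := max_card (mem [set j | col j A != 0%R]); rewrite card_ord.
Qed.

End Gen.

Lemma hw_ge_rw (F : fieldType) (L : fieldExtType F) n (u : 'rV[L]_n) :
  (rweight u <= hweight u)%N.
Proof.
rewrite /rweight; apply: leq_trans (rank_le_cols _) _.
apply: subset_leq_card; apply/subsetP => j; rewrite !inE; apply: contraNN => /eqP uj.
by apply/eqP/matrixP => a b; rewrite !mxE uj linear0.
Qed.

Lemma rweight_mul (F : fieldType) (L : fieldExtType F) n (u : 'rV[L]_n) (D : 'M[F]_n) :
  row_free D -> rweight (u *m map_mx (in_alg L) D) = rweight u.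
Proof.
rewrite /rweight => Dfree.
set X := vbasis _.
have -> : (\matrix_(i < \dim (fullv : {vspace L}), j < n) coord X i ((u *m map_mx (in_alg L) D) 0 j))
   = (\matrix_(i < \dim (fullv : {vspace L}), j < n) coord X i (u 0 j)) *m D.
  apply/matrixP => a j; rewrite !mxE linear_sum; apply: eq_bigr => t _; rewrite !mxE.
  by rewrite mulr_algr linearZ /= mulrC.
by rewrite mxrankMfree.
Qed.
Lemma mulmx_castmx (K : nzRingType) a b p s (e : a = b) (A : 'M[K]_(p, a)) (B : 'M_(a, s)) :
  castmx (erefl, e) A *m castmx (e, erefl) B = A *m B.
Proof. by case: b / e; rewrite !castmx_id. Qed.

Lemma castmx_mulr (K : nzRingType) a b p s (e : a = b) (A : 'M[K]_(p, s)) (B : 'M_(s, a)) :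
  castmx (erefl, e) (A *m B) = A *m castmx (erefl, e) B.
Proof. by case: b / e; rewrite !castmx_id. Qed.

Definition dblk (K : nzRingType) m l (q : 'I_m -> nat) (Bs : forall i, 'M[K]_(l, q i)) :
   'M[K]_(m * l, \sum_(i < m) q i) :=
  castmx (sum_const_ord m l, erefl)
    (\mxblock_(i < m, j < m) @diag_block K m (fun=> l) q Bs i j).

Lemma blockdiag_dblk (K : nzRingType) m l (r : 'I_m -> nat) (Ms : forall i, 'M[K]_(l, l + r i)) :
  blockdiag_mx Ms = dblk Ms.
Proof. by []. Qed.

Lemma diag_block_eq (K : nzRingType) m l q (Bs : forall i, 'M[K]_(l, q i)) j :
  @diag_block K m (fun=> l) q Bs j j = Bs j.
Proof. by rewrite /diag_block; case: eqP => // e; rewrite castmx_id. Qed.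

Lemma diag_block_neq (K : nzRingType) m l q (Bs : forall i, 'M[K]_(l, q i)) i j :
  i != j -> @diag_block K m (fun=> l) q Bs i j = 0.
Proof. by rewrite /diag_block; case: eqP. Qed.

Lemma mul_dblk (K : nzRingType) m l k q (Bs : forall i, 'M[K]_(l, q i)) (A : 'M[K]_(k, m * l)) :
  A *m dblk Bs = \mxrow_j (submxrow (castmx (erefl, esym (sum_const_ord m l)) A) j *m Bs j).
Proof.
set A' := castmx (erefl k, esym (sum_const_ord m l)) A.
have -> : A = castmx (erefl k, sum_const_ord m l) A' by rewrite /A' castmxKV.
rewrite /dblk mulmx_castmx -[A' in LHS]submxrowK mul_mxrow_mxblock; apply: eq_mxrow => j.
rewrite (bigD1 j) //= diag_block_eq big1 ?addr0 // => i ij.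
by rewrite diag_block_neq ?mulmx0.
Qed.

Lemma map_dblk (F L : nzRingType) (f : {rmorphism F -> L}) m l q (Bs : forall i, 'M[F]_(l, q i)) :
  map_mx f (dblk Bs) = dblk (fun i => map_mx f (Bs i)) :> 'M_(m * l, _).
Proof.
rewrite /dblk map_castmx; congr castmx; apply/matrixP => a b; rewrite !mxE /diag_block.
case: eqP => [e|_]; last by rewrite !mxE rmorph0.
by rewrite !castmxE /= mxE.
Qed.

Theorem theorem13 (F : finFieldType) (L : fieldExtType F)
  (m l k N : nat) (r : 'I_m -> nat)
  (Hm : (0 < m)%N) (Hl : (0 < l)%N) (Hr : forall i, (0 < r i)%N)
  (Hk : (0 < k)%N) (HN : (0 < N)%N)
  (HdimL : \dim (fullv : {vspace L}) = N)
  (Hlk : (l <= k)%N) (Hkml : (k <= m * l)%N) (HNml : (m * l <= N)%N)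
  (Gt : 'M[L]_(k, m * l)) (HGt : MRD_gen Gt)
  (Ms : forall i : 'I_m, 'M[F]_(l, l + r i))
  (HMs : forall i, MDS_code (Ms i) l) :
  is_PMDS (Gt *m map_mx (in_alg L) (blockdiag_mx Ms)).
Proof.
set e := sum_const_ord m l.
set Gt' := castmx (erefl k, esym e) Gt.
pose Gi i := submxrow Gt' i.
have [rGt HdGt] := HGt.
have GtFree : row_free Gt by rewrite /row_free rGt.
have hGt : forall c, (c <= Gt)%MS -> c != 0 -> (m * l - k + 1 <= hweight c)%N.
  by move=> c cG cnz; exact: leq_trans (HdGt.2 c cG cnz) (hw_ge_rw c).
have rGi : forall i, \rank (Gi i) = l.
  move=> i; have -> : Gi i = colsub (fun t => cast_ord e (tagnat.Rank i t)) Gt.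
    by apply/matrixP => a b; rewrite !mxE castmxE /=; congr (Gt _ _); apply/val_inj.
  apply: mds_info GtFree hGt _ Hlk.
  by move=> x y /cast_ord_inj /tagnat.rank_inj H; exact: eq_from_Tagged H.
have MsFree : forall i, row_free (Ms i) by move=> i; rewrite /row_free (HMs i).1.
pose MsL i := map_mx (in_alg L) (Ms i).
have MsLFree : forall i, row_free (MsL i) by move=> i; rewrite /row_free /MsL mxrank_map; exact: MsFree.
have MsInfo : forall i (g : 'I_l -> 'I_(l + r i)), injective g -> row_free (colsub g (Ms i)).
  move=> i g ginj; rewrite /row_free; apply/eqP.
  exact: mds_info (MsFree i) (HMs i).2.2 ginj (leqnn l).
have HG : Gt *m map_mx (in_alg L) (blockdiag_mx Ms) = \mxrow_j (Gi j *m MsL j).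
  by rewrite blockdiag_dblk map_dblk mul_dblk.
rewrite HG; split.
- apply/eqP; apply: inj_row_free => v Hv.
  have Hi : forall i, v *m Gi i = 0.
    move=> i; apply/eqP; rewrite -(mulmx_free_eq0 _ (MsLFree i)) -mulmxA.
    have := congr1 (fun M => submxrow M i) Hv.
    by rewrite /= -mul_submxrow mxrowK submxrow0 => ->.
  have H' : v *m Gt' = 0.
    by rewrite -[Gt']submxrowK mul_mxrow (eq_mxrow Hi) mxrow0.
  have : v *m Gt = 0.
    rewrite -[Gt](castmxKV (erefl k) e) -castmx_mulr -/Gt' H'.
    by apply/matrixP => a b; rewrite castmxE !mxE.
  by move/eqP; rewrite mulmx_free_eq0 // => /eqP.
- rewrite big_split /= sum_const_ord.
  have : (m <= \sum_(i < m) r i)%N.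
    rewrite -[X in (X <= _)%N](card_ord m) -sum1_card; apply: leq_sum => i _; exact: Hr i.
  exact: arith6 Hm Hkml.
- move=> i; rewrite mxrowK; apply: (mds_of_bound _ Hl).
    by rewrite mxrankMfree // rGi.
  move=> c cB cnz; apply: (mds_from_info (MsLFree i) _ (submx_trans cB (submxMl _ _)) cnz).
  move=> g ginj; rewrite /row_free /MsL -map_mxsub mxrank_map; exact: MsInfo.
- move=> f finj.
  set D := castmx (erefl (m * l), e) (dblk (fun i => colsub (f i) (Ms i))).
  have Hp : punct_mx (\mxrow_j (Gi j *m MsL j)) f = Gt *m map_mx (in_alg L) D.
    rewrite /punct_mx /D map_castmx -castmx_mulr map_dblk mul_dblk.
    congr castmx; apply: eq_mxrow => i.
    by rewrite mxrowK -mulmx_colsub /MsL map_mxsub.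
  have Dfree : row_free D.
    apply: inj_row_free => v Hv.
    set v' := castmx (erefl 1%N, esym e) v.
    have Hv' : \mxrow_j (submxrow v' j *m colsub (f j) (Ms j)) = 0.
      move: Hv; rewrite /D -castmx_mulr mul_dblk -/v' => Hv.
      rewrite -[LHS](castmxK (erefl 1%N) e) Hv.
      by apply/matrixP => a b; rewrite castmxE !mxE.
    have v'0 : v' = 0.
      apply/mxrowP => j; rewrite submxrow0.
      have := congr1 (fun M => submxrow M j) Hv'; rewrite /= mxrowK submxrow0.
      by move/eqP; rewrite mulmx_free_eq0 ?MsInfo // => /eqP.
    rewrite -[v](castmxKV (erefl 1%N) e) -/v' v'0.
    by apply/matrixP => a b; rewrite castmxE !mxE.
  rewrite Hp; apply: (mds_of_bound _ Hk).
    by rewrite mxrankMfree // /row_free mxrank_map.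
  move=> c /submxP [w ->] cnz; rewrite mulmxA.
  have c'nz : w *m Gt != 0 by apply: contraNneq cnz => H0; rewrite mulmxA H0 mul0mx.
  apply: leq_trans (hw_ge_rw _); rewrite rweight_mul //.
  exact: HdGt.2 _ (submxMl _ _) c'nz.
Qed.
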